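(* For every integer $k \geq 1$ there is a graph $G$ of tree-width $k$ with $\operatorname{pn}_u(G) \geq \operatorname{pn}_\ell(G) \geq k$.
   Context: All graphs are finite and simple. A linear embedding of a graph $G=(V,E)$ is a pair $(\prec,\mathcal{P})$ where $\prec$ is a total ordering of $V$ and $\mathcal{P}$ is a partition of $E$ into parts called pages. Two edges $uv, xy$ with $u\prec v$, $x \prec y$ cross if $u \prec x \prec v \prec y$ or $x \prec u \prec y \prec v$. A book embedding is a linear embedding in which no two crossing edges lie on the same page. For a book embedding and a vertex $v$, let $\mathcal{P}_v$ be the set of pages containing at least one edge incident to $v$; the embedding is $k$-local if $|\mathcal{P}_v| \le k$ for all $v$, and the local page number $\operatorname{pn}_\ell(G)$ is the smallest $k$ such that $G$ admits a $k$-local book embedding (with any number of pages). For a linear embedding and a page $P$, let $G_P$ be the subgraph consisting of the edges of $P$ and all vertices incident to an edge of $P$. A union embedding is a linear embedding such that for every page $P$ and every connected component $C$ of $G_P$, no two edges of $C$ cross. The union page number $\operatorname{pn}_u(G)$ is the smallest number of pages of a union embedding of $G$. *)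

(* Defs.v *)
From mathcomp Require Import all_boot all_fingroup.
Set Implicit Arguments. Unset Strict Implicit. Unset Printing Implicit Defensive.

Definition simple_graph (n : nat) (e : rel 'I_n) : Prop :=
  (forall u v, e u v = e v u) /\ (forall v, ~~ e v v).

Definition IsMin (P : nat -> Prop) (m : nat) : Prop :=
  P m /\ forall q, P q -> m <= q.

(* a (finite, nonempty) tree on 'I_m: simple, connected, with m-1 edges
   (each edge counted twice as ordered pairs) *)
Definition is_tree (m : nat) (tr : rel 'I_m) : Prop :=
  0 < m /\ simple_graph tr /\
  (forall a b, connect tr a b) /\
  #|[set p : 'I_m * 'I_m | tr p.1 p.2]| = (m.-1).*2.

Definition tree_decomposition (n : nat) (e : rel 'I_n)
  (m : nat) (tr : rel 'I_m) (B : 'I_m -> {set 'I_n}) : Prop :=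
  is_tree tr /\
  (forall v, exists t, v \in B t) /\
  (forall u v, e u v -> exists t, (u \in B t) && (v \in B t)) /\
  (forall v t1 t2, v \in B t1 -> v \in B t2 ->
     connect [rel a b | [&& tr a b, v \in B a & v \in B b]] t1 t2).

Definition has_td_of_width (n : nat) (e : rel 'I_n) (w : nat) : Prop :=
  exists (m : nat) (tr : rel 'I_m) (B : 'I_m -> {set 'I_n}),
    tree_decomposition e tr B /\ forall t, #|B t| <= w.+1.

Definition treewidth_is (n : nat) (e : rel 'I_n) (k : nat) : Prop :=
  IsMin (has_td_of_width e) k.

(* A linear embedding: a total order on vertices, given by a bijective
   position map pos (u precedes v iff pos u < pos v), and a partition of
   the edges into pages, given by a page label page u v (nat) of each edge,
   symmetric on edges. *)
Definition linear_embedding (n : nat) (e : rel 'I_n)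
  (pos : {perm 'I_n}) (page : 'I_n -> 'I_n -> nat) : Prop :=
  forall u v, e u v -> page u v = page v u.

(* ordered edges (u,v) and (x,y) with pos u < pos v, pos x < pos y cross:
   u < x < v < y  (the symmetric case is obtained by swapping the edges) *)
Definition crossing_pattern (n : nat) (pos : {perm 'I_n}) (u v x y : 'I_n) :=
  [&& pos u < pos x, pos x < pos v & pos v < pos y].

Definition book_embedding (n : nat) (e : rel 'I_n)
  (pos : {perm 'I_n}) (page : 'I_n -> 'I_n -> nat) : Prop :=
  linear_embedding e pos page /\
  forall u v x y, e u v -> e x y -> page u v = page x y ->
    ~~ crossing_pattern pos u v x y.

Definition pages_at (n : nat) (e : rel 'I_n) (page : 'I_n -> 'I_n -> nat)
  (v : 'I_n) : seq nat :=
  undup [seq page v u | u <- enum 'I_n & e v u].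

Definition has_local_book_embedding (n : nat) (e : rel 'I_n) (k : nat) : Prop :=
  exists pos page, book_embedding e pos page /\
    forall v, size (pages_at e page v) <= k.

Definition local_page_number_is (n : nat) (e : rel 'I_n) (k : nat) : Prop :=
  IsMin (has_local_book_embedding e) k.

Definition union_embedding (n : nat) (e : rel 'I_n)
  (pos : {perm 'I_n}) (page : 'I_n -> 'I_n -> nat) : Prop :=
  linear_embedding e pos page /\
  forall u v x y, e u v -> e x y -> page u v = page x y ->
    connect [rel a b | e a b && (page a b == page u v)] u x ->
    ~~ crossing_pattern pos u v x y.

Definition has_union_embedding (n : nat) (e : rel 'I_n) (s : nat) : Prop :=
  exists pos page, union_embedding e pos page /\
    forall u v, e u v -> page u v < s.

Definition union_page_number_is (n : nat) (e : rel 'I_n) (s : nat) : Prop :=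
  IsMin (has_union_embedding e) s.

(* Main.v *)
Require Import Defs.
From mathcomp Require Import all_boot all_fingroup zify.
Set Implicit Arguments. Unset Strict Implicit. Unset Printing Implicit Defensive.

Section TreeLemmas.
Variable m : nat.
Variable tr : rel 'I_m.
Hypothesis trC : forall a b, tr a b = tr b a.
Hypothesis trI : forall a, ~~ tr a a.

Definition RA (A : {set 'I_m}) : rel 'I_m := [rel a b | [&& tr a b, a \in A & b \in A]].
Definition PA (A : {set 'I_m}) : {set 'I_m * 'I_m} :=
  [set p | [&& tr p.1 p.2, p.1 \in A & p.2 \in A]].

Lemma first_step A a b : a != b -> connect (RA A) a b -> exists w, RA A a w.
Proof.
move=> ab /connectP [[|w p] /= Hp Hl]; first by rewrite Hl eqxx in ab.
by exists w; case/andP: Hp.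
Qed.

Lemma leaf_conn (A S : {set 'I_m}) l t : A \subset S -> l \in S ->
  (forall w, w \in S -> tr l w -> w = t) ->
  forall a b, a != l -> b != l -> connect (RA A) a b -> connect (RA (A :\ l)) a b.
Proof.
move=> AS lS uniq a b al bl /connectP [p Hp Hl].
pose X y := ((y != l) && connect (RA (A :\ l)) a y) || ((y == l) && connect (RA (A :\ l)) a t).
have step : forall y z, X y -> RA A y z -> X z.
  move=> y z; rewrite /X /=; case/orP=> /andP [Hy Hc] /and3P [tyz yA zA].
  - case: (eqVneq z l) => [zl|zl] /=.
      subst z. have yt : y = t by apply: uniq; [exact: (subsetP AS) | rewrite trC].
      by subst y; rewrite Hc.
    rewrite orbF; apply: connect_trans Hc (connect1 _); by rewrite /RA /= !inE tyz Hy zl yA zA.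
  - move/eqP: Hy => Hy; subst y.
    have zt : z = t by apply: uniq; [exact: (subsetP AS) |].
    subst z; have tl : t != l by apply/eqP => E; move: tyz; rewrite E (negbTE (trI _)).
    by rewrite tl Hc.
have gen : forall q y, X y -> path (RA A) y q -> X (last y q).
  elim=> [|z q IH] y //= Xy /andP [Hyz Hq].
  by apply: IH => //; apply: step Hyz.
have : X (last a p) by apply: gen => //; rewrite /X al connect0.
rewrite -Hl /X (negbTE bl) /= orbF; exact.
Qed.

Lemma deg_sum (S : {set 'I_m}) :
  #|PA S| = \sum_(a in S) #|[set b in S | tr a b]|.
Proof.
rewrite (eq_bigr (fun a => \sum_(b | (b \in S) && tr a b) 1)); last first.
  by move=> a _; rewrite sum1dep_card.
rewrite pair_big_dep sum1dep_card; apply: eq_card => p; rewrite !inE.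
by rewrite andbC andbA.
Qed.

Lemma card_le1 (D : {set 'I_m}) x y : #|D| <= 1 -> x \in D -> y \in D -> x = y.
Proof.
move=> HD xD yD; apply/eqP; apply: contraTT HD => xy.
have : [set x; y] \subset D by apply/subsetP => z; rewrite !inE => /orP [] /eqP ->.
by move/subset_leq_card; rewrite cards2 xy -ltnNge.
Qed.

Lemma leaf_exists (S : {set 'I_m}) : 1 < #|S| ->
  (forall a b, a \in S -> b \in S -> connect (RA S) a b) ->
  #|PA S| = (#|S|.-1).*2 ->
  exists l t, [/\ l \in S, t \in S, tr l t & forall w, w \in S -> tr l w -> w = t].
Proof.
move=> S2 Sc SP.
have [a aS adeg] : exists2 a, a \in S & #|[set b in S | tr a b]| <= 1.
  apply/exists_inP; apply: contraT; rewrite negb_exists_in => /forall_inP H.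
  have : \sum_(a in S) 2 <= #|PA S|.
    by rewrite deg_sum; apply: leq_sum => a /H; rewrite -ltnNge.
  rewrite sum_nat_const SP; lia.
have [b bS ba] : exists2 b, b \in S & b != a.
  have : 0 < #|S :\ a| by move: S2; rewrite (cardsD1 a S) aS; lia.
  by case/card_gt0P => b; rewrite !inE => /andP [ba bS]; exists b.
have ab : a != b by rewrite eq_sym.
have [w /and3P [taw aS' wS]] := first_step ab (Sc a b aS bS).
have wD : w \in [set b in S | tr a b] by rewrite inE wS taw.
exists a, w; split => // z zS taz.
by apply: (card_le1 adeg); rewrite // inE zS taz.
Qed.

Lemma P_remove (S : {set 'I_m}) l t : l \in S -> t \in S -> tr l t ->
  (forall w, w \in S -> tr l w -> w = t) -> #|PA S| = (#|PA (S :\ l)|).+2.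
Proof.
move=> lS tS tlt U.
have lt : l != t by apply/eqP => E; move: tlt; rewrite E (negbTE (trI _)).
have -> : PA S = PA (S :\ l) :|: [set (l, t); (t, l)].
  apply/setP => [[x y]]; rewrite !inE /= !xpair_eqE.
  have lt' : t != l by rewrite eq_sym.
  case: (eqVneq x l) => [->|xl]; case: (eqVneq y l) => [->|yl];
    rewrite /= ?(negbTE (trI _)) ?andbF ?andbT ?eqxx ?(negbTE lt) ?(negbTE lt') ?orbF //=.
  - apply/idP/idP => [/and3P [ty _ yS]|/eqP ->]; last by rewrite tlt lS tS.
    by apply/eqP; apply: U.
  - apply/idP/idP => [/and3P [ty yS _]|/eqP ->]; last by rewrite trC tlt lS tS.
    by apply/eqP; apply: U => //; rewrite trC.
rewrite cardsU.
have -> : PA (S :\ l) :&: [set (l, t); (t, l)] = set0.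
  apply/setP => [[x y]]; rewrite !inE /= !xpair_eqE.
  by case: (eqVneq x l) => [->|]; case: (eqVneq y l) => [->|] //=; rewrite ?andbF ?andbT.
rewrite cards0 subn0 cards2 xpair_eqE (negbTE lt) /=; lia.
Qed.

Lemma helly n (B : 'I_m -> {set 'I_n}) (C : {set 'I_n}) (S : {set 'I_m}) :
  0 < #|S| ->
  (forall a b, a \in S -> b \in S -> connect (RA S) a b) ->
  #|PA S| = (#|S|.-1).*2 ->
  (forall v t1 t2, t1 \in S -> t2 \in S -> v \in B t1 -> v \in B t2 ->
     connect (RA (S :&: [set t | v \in B t])) t1 t2) ->
  (forall u v, u \in C -> v \in C -> exists2 t, t \in S & (u \in B t) && (v \in B t)) ->
  exists2 t, t \in S & C \subset B t.
Proof.
move Hs : #|S| => s; elim: s S Hs => [|s IH] S Hs //.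
case: s IH Hs => [|s] IH Hs _ Sc SP Sb Cl.
  move/eqP/cards1P: Hs => [t0 St0]; exists t0; first by rewrite St0 set11.
  apply/subsetP => u uC; have [t tS /andP [ut _]] := Cl u u uC uC.
  by move: tS ut; rewrite St0 inE => /eqP ->.
have S2 : 1 < #|S| by rewrite Hs.
have SP' : #|PA S| = (#|S|.-1).*2 by rewrite SP Hs.
have [l [t [lS tS tlt U]]] := leaf_exists S2 Sc SP'.
have [Cl'|] := boolP (C \subset B l); first by exists l.
case/subsetPn => c cC clB.
have lt : t != l by apply/eqP => E; move: tlt; rewrite E (negbTE (trI _)).
have [t' t'S Ct'] : exists2 t', t' \in S :\ l & C \subset B t'.
  apply: (IH (S :\ l)) => //.
  - by move: Hs; rewrite (cardsD1 l S) lS add1n => -[].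
  - move=> a b; rewrite !inE => /andP [al aS] /andP [bl bS].
    exact: (leaf_conn (subxx S) lS U al bl (Sc a b aS bS)).
  - have := P_remove lS tS tlt U; rewrite SP.
    have : #|S :\ l| = s.+1 by move: Hs; rewrite (cardsD1 l S) lS add1n => -[].
    move=> _ /=; lia.
  - move=> v t1 t2; rewrite !inE => /andP [t1l t1S] /andP [t2l t2S] vt1 vt2.
    have -> : (S :\ l) :&: [set t | v \in B t] = (S :&: [set t | v \in B t]) :\ l.
      by apply/setP => x; rewrite !inE; case: (x == l); rewrite ?andbF.
    apply: (leaf_conn _ lS U t1l t2l (Sb v t1 t2 t1S t2S vt1 vt2)).
    exact: subsetIl.
  - have inBt : forall u, u \in C -> u \in B l -> u \in B t.
      move=> u uC ul; have [t1 t1S /andP [ut1 ct1]] := Cl u c uC cC.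
      have t1l : l != t1 by apply/eqP => E; move: clB; rewrite E ct1.
      have [w /and3P [tlw _ /setIP [wS]]] := first_step t1l (Sb u l t1 lS t1S ul ut1).
      by rewrite inE (U w wS tlw).
    move=> u v uC vC; have [t1 t1S /andP [ut1 vt1]] := Cl u v uC vC.
    case: (eqVneq t1 l) => [E|t1l].
      subst t1; exists t; first by rewrite !inE lt tS.
      by rewrite !inBt.
    by exists t1; rewrite ?inE ?t1l ?t1S ?ut1 ?vt1.
by exists t'; move: t'S; rewrite inE => /andP [].
Qed.
End TreeLemmas.
Lemma two_nat (lo hi x y : nat) : lo < hi -> x != lo -> x != hi -> y != lo -> y != hi -> x != y ->
  ((lo < x) && (x < hi)) = ((lo < y) && (y < hi)) ->
  ~~ [&& lo < x, x < y & y < hi] -> ~~ [&& lo < y, y < x & x < hi] ->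
  ~~ [&& x < y, y < lo & lo < hi] -> ~~ [&& y < x, x < lo & lo < hi] ->
  ~~ [&& x < lo, lo < hi & hi < y] -> ~~ [&& y < lo, lo < hi & hi < x] ->
  ~~ [&& lo < hi, hi < x & x < y] -> ~~ [&& lo < hi, hi < y & y < x] -> False.
Proof. lia. Qed.

Section K23.
Variables (n : nat) (pos : 'I_n -> nat) (Ed : rel 'I_n) (a b x1 x2 x3 : 'I_n).
Hypothesis posI : injective pos.
Hypothesis Hd : uniq [:: a; b; x1; x2; x3].
Hypothesis HE : forall u z, u \in [:: a; b] -> z \in [:: x1; x2; x3] -> Ed u z && Ed z u.
Hypothesis NC : forall u v w z, Ed u v -> Ed w z ->
  ~~ [&& pos u < pos w, pos w < pos v & pos v < pos z].

Lemma two_graph lo hi x y : lo \in [:: a; b] -> hi \in [:: a; b] -> x \in [:: x1; x2; x3] ->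
  y \in [:: x1; x2; x3] -> x != y -> pos lo < pos hi ->
  ((pos lo < pos x) && (pos x < pos hi)) = ((pos lo < pos y) && (pos y < pos hi)) -> False.
Proof.
move=> hlo hhi hx hy xy lh side.
have neq : forall u z, u \in [:: a; b] -> z \in [:: x1; x2; x3] -> pos z != pos u.
  move=> u z hu hz; rewrite (inj_eq posI); apply/eqP => E; subst z.
  have := Hd; rewrite -[ [:: a; b; x1; x2; x3] ]/([:: a; b] ++ [:: x1; x2; x3]) cat_uniq.
  by case/and3P => _ /hasPn H _; move: (H u hz); rewrite hu.
have Ex := HE hlo hx; have Ey := HE hlo hy; have Hx := HE hhi hx; have Hy := HE hhi hy.
case/andP: Ex => Elx Exl; case/andP: Ey => Ely Eyl; case/andP: Hx => Ehx Exh; case/andP: Hy => Ehy Eyh.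
apply: (two_nat lh (neq _ _ hlo hx) (neq _ _ hhi hx) (neq _ _ hlo hy) (neq _ _ hhi hy)
  (ltac:(by rewrite (inj_eq posI))) side).
- exact: NC Ely Exh.
- exact: NC Elx Eyh.
- exact: NC Exl Eyh.
- exact: NC Eyl Exh.
- exact: NC Exh Ely.
- exact: NC Eyh Elx.
- exact: NC Elx Ehy.
- exact: NC Ely Ehx.
Qed.

Lemma k23 : False.
Proof.
have ab : a != b by move: Hd; rewrite /= !inE; case: (a == b).
have [x12 x13 x23] : [/\ x1 != x2, x1 != x3 & x2 != x3].
  by move: Hd; rewrite /= !inE; case: (x1 == x2); case: (x1 == x3); case: (x2 == x3);
     rewrite ?orbT ?orbF ?andbF.
have ina : a \in [:: a; b] by rewrite !inE eqxx.
have inb : b \in [:: a; b] by rewrite !inE eqxx orbT.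
have i1 : x1 \in [:: x1; x2; x3] by rewrite !inE eqxx.
have i2 : x2 \in [:: x1; x2; x3] by rewrite !inE eqxx orbT.
have i3 : x3 \in [:: x1; x2; x3] by rewrite !inE eqxx !orbT.
have key : forall lo hi, lo \in [:: a; b] -> hi \in [:: a; b] -> pos lo < pos hi -> False.
  move=> lo hi hlo hhi lh.
  pose sd z := (pos lo < pos z) && (pos z < pos hi).
  have T := two_graph hlo hhi.
  have F : forall x y, x \in [:: x1; x2; x3] -> y \in [:: x1; x2; x3] -> x != y -> sd x = sd y -> False.
    by move=> x y hx hy xy; apply: T.
  case E1 : (sd x1); case E2 : (sd x2); case E3 : (sd x3).
  all: try first [ by apply: (F x1 x2) => //; rewrite E1 E2
             | by apply: (F x1 x3) => //; rewrite E1 E3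
             | by apply: (F x2 x3) => //; rewrite E2 E3 ].
have : pos a != pos b by rewrite (inj_eq posI).
case: (ltngtP (pos a) (pos b)) => // h _.
- exact: (key a b).
- exact: (key b a).
Qed.
End K23.

Lemma pigeon3 (A B : finType) (f : A -> B) : 2 * #|B| < #|A| ->
  exists x1 x2 x3, uniq [:: x1; x2; x3] /\ f x1 = f x2 /\ f x1 = f x3.
Proof.
move=> H.
have [b Hb] : exists b, 2 < #|[set x | f x == b]|.
  apply/existsP; apply: contraLR H; rewrite negb_exists => /forallP Hf; rewrite -leqNgt.
  rewrite -sum1_card (partition_big f xpredT) //=.
  rewrite mulnC -sum_nat_const; apply: leq_sum => b _; rewrite sum1dep_card.
  by have := Hf b; rewrite -leqNgt.
set S := [set x | f x == b] in Hb.
have [x1 x1S] : exists x1, x1 \in S by apply/card_gt0P; lia.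
have [x2 x2S] : exists x2, x2 \in S :\ x1.
  by apply/card_gt0P; move: Hb; rewrite (cardsD1 x1 S) x1S; lia.
have [x3 x3S] : exists x3, x3 \in S :\ x1 :\ x2.
  apply/card_gt0P; move: Hb; rewrite (cardsD1 x1 S) x1S (cardsD1 x2 (S :\ x1)) x2S; lia.
move: x2S x3S; rewrite !inE => /andP [x21 /eqP f2] /and3P [x32 x31 /eqP f3].
move: x1S; rewrite inE => /eqP f1.
exists x1, x2, x3; split; last by rewrite f1 f2 f3.
by rewrite /= !inE negb_or eq_sym x21 eq_sym x31 eq_sym x32.
Qed.

Section Main.
Variable k' : nat.
Local Notation k := k'.+1.
Definition NN := (2 * k ^ 3).+1.
Local Notation n := (k + NN).

Definition eg : rel 'I_n := fun u v => (u != v) && ((u < k) || (v < k)).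
Definition ap (i : 'I_k) : 'I_n := widen_ord (leq_addr NN k) i.
Definition xv (j : 'I_NN) : 'I_n := rshift k j.

Lemma ap_val i : (ap i : nat) = i. Proof. by []. Qed.
Lemma xv_val j : (xv j : nat) = k + j. Proof. by []. Qed.
Lemma eg_ax i j : eg (ap i) (xv j) /\ eg (xv j) (ap i).
Proof.
rewrite /eg /= -!val_eqE /=.
have := ltn_ord i; split; apply/andP; split; try apply/eqP; lia.
Qed.
Lemma egC u v : eg u v = eg v u.
Proof. by rewrite /eg /= eq_sym orbC. Qed.

Lemma core (page : 'I_n -> 'I_n -> nat) (valid : 'I_n -> nat -> bool) (code : 'I_n -> nat -> nat) :
  (forall u v, eg u v -> page u v = page v u) ->
  (forall u v, eg u v -> valid u (page u v)) ->
  (forall u p, valid u p -> code u p < k) ->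
  (forall u p1 p2, valid u p1 -> valid u p2 -> code u p1 = code u p2 -> p1 = p2) ->
  (forall j : 'I_NN, exists i i' : 'I_k, i != i' /\ page (xv j) (ap i) = page (xv j) (ap i')) ->
  (forall (i i' : 'I_k) (j1 j2 j3 : 'I_NN) p, i != i' -> uniq [:: j1; j2; j3] ->
     (forall j, j \in [:: j1; j2; j3] -> page (ap i) (xv j) = p /\ page (ap i') (xv j) = p) -> False) ->
  False.
Proof.
move=> psym hv hc hci hex hfin.
pose P j (ii : 'I_k * 'I_k) := (ii.1 != ii.2) && (page (xv j) (ap ii.1) == page (xv j) (ap ii.2)).
pose g j : 'I_k * 'I_k * 'I_k := if [pick ii | P j ii] is Some ii then
   (ii.1, ii.2, inord (code (ap ii.1) (page (ap ii.1) (xv j)))) else (ord0, ord0, ord0).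
have gj : forall j, exists ii, g j = (ii.1, ii.2, inord (code (ap ii.1) (page (ap ii.1) (xv j)))) /\ P j ii.
  move=> j; rewrite /g; case: pickP => [ii Hii|none]; first by exists ii.
  have [i [i' [ii' E]]] := hex j; move: (none (i, i')); rewrite /P /= ii' E eqxx //.
have [j1 [j2 [j3 [U [E2 E3]]]]] : exists j1 j2 j3, uniq [:: j1; j2; j3] /\ g j1 = g j2 /\ g j1 = g j3.
  apply: pigeon3; rewrite !card_prod !card_ord /NN; nia.
have [[i i'] [G1 /andP [/= ii' /eqP Pi]]] := gj j1.
have key : forall j, g j = g j1 -> page (ap i) (xv j) = page (ap i) (xv j1) /\ page (ap i') (xv j) = page (ap i) (xv j1).
  move=> j; have [[l l'] [Gj /andP [/= ll' /eqP Pl]]] := gj j.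
  rewrite Gj G1 /= => -[el el' ec]; subst l l'.
  have v1 := hv _ _ (proj1 (eg_ax i j1)); have vj := hv _ _ (proj1 (eg_ax i j)).
  have c1 := hc _ _ v1; have cj := hc _ _ vj.
  have ec' : code (ap i) (page (ap i) (xv j)) = code (ap i) (page (ap i) (xv j1)).
    by have := congr1 val ec; rewrite /= !inordK.
  clear ec; rename ec' into ec.
  have eq1 := hci _ _ _ vj v1 ec.
  split => //.
  rewrite -eq1 (psym _ _ (proj1 (eg_ax i' j))) -Pl.
  by rewrite (psym _ _ (proj2 (eg_ax i j))).
apply: (hfin i i' j1 j2 j3 (page (ap i) (xv j1)) ii' U) => j.
rewrite !inE => /or3P [] /eqP ->; apply: key => //.
Qed.

Lemma hex_gen (f : 'I_k -> nat) (L : seq nat) : size L < k -> (forall i, f i \in L) ->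
  exists i i' : 'I_k, i != i' /\ f i = f i'.
Proof.
move=> sL fL; case: (boolP (injectiveb f)) => [/injectiveP finj|/injectivePn [x [y xy fxy]]].
  have : size (map f (enum 'I_k)) <= size L.
    apply: uniq_leq_size; first by rewrite map_inj_uniq ?enum_uniq.
    by move=> z /mapP [i _ ->].
  by rewrite size_map size_enum_ord; lia.
by exists x, y.
Qed.

Definition V5 (i i' : 'I_k) (j1 j2 j3 : 'I_NN) := [:: ap i; ap i'; xv j1; xv j2; xv j3].

Lemma V5_uniq i i' j1 j2 j3 : i != i' -> uniq [:: j1; j2; j3] -> uniq (V5 i i' j1 j2 j3).
Proof.
move=> ii' U; rewrite -(map_inj_uniq val_inj) /=.
move: ii' U; rewrite /= !inE -!val_eqE /=.
have := ltn_ord i; have := ltn_ord i'; lia.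
Qed.

Lemma nc_gen (pos : {perm 'I_n}) (page : 'I_n -> 'I_n -> nat) (i i' : 'I_k) (j1 j2 j3 : 'I_NN) p :
  i != i' -> uniq [:: j1; j2; j3] ->
  (forall u v, eg u v -> page u v = page v u) ->
  (forall j, j \in [:: j1; j2; j3] -> page (ap i) (xv j) = p /\ page (ap i') (xv j) = p) ->
  (forall u v w z, u \in V5 i i' j1 j2 j3 -> v \in V5 i i' j1 j2 j3 -> w \in V5 i i' j1 j2 j3 ->
     z \in V5 i i' j1 j2 j3 -> eg u v -> eg w z -> page u v = p -> page w z = p ->
     ~~ crossing_pattern pos u v w z) -> False.
Proof.
move=> ii' U psym Hp NC.
pose Ed := fun u v => [&& u \in V5 i i' j1 j2 j3, v \in V5 i i' j1 j2 j3, eg u v & page u v == p].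
apply: (@k23 n (fun v => pos v) Ed (ap i) (ap i') (xv j1) (xv j2) (xv j3)).
- by move=> x y /val_inj /perm_inj.
- exact: V5_uniq.
- move=> u z hu hz.
  have [jj [-> hjj]] : exists jj, z = xv jj /\ jj \in [:: j1; j2; j3].
    move: hz; rewrite !inE => /or3P [] /eqP ->; eexists; split; try reflexivity; by rewrite !inE eqxx ?orbT.
  have [p1 p2] := Hp jj hjj.
  have zin : xv jj \in V5 i i' j1 j2 j3 by move: hjj; rewrite /V5 !inE => /or3P [] /eqP ->; rewrite eqxx ?orbT.
  move: hu; rewrite !inE => /orP [] /eqP ->.
  + have [e1 e2] := eg_ax i jj.
    rewrite /Ed zin e1 e2 /V5 !inE eqxx /= -(psym _ _ e1) p1 eqxx. done.
  + have [e1 e2] := eg_ax i' jj.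
    rewrite /Ed zin e1 e2 /V5 !inE eqxx ?orbT /= -(psym _ _ e1) p2 eqxx. done.
- move=> u v w z /and4P [hu hv e1 /eqP p1] /and4P [hw hz e2 /eqP p2].
  exact: NC.
Qed.

Lemma local_lb q : has_local_book_embedding eg q -> k <= q.
Proof.
case=> pos [page [[lin bk] Hs]]; rewrite leqNgt; apply/negP => qk.
have hv : forall u v, eg u v -> page u v \in pages_at eg page u.
  move=> u v e; rewrite /pages_at mem_undup; apply/mapP; exists v => //.
  by rewrite mem_filter e mem_enum.
apply: (@core page (fun u p => p \in pages_at eg page u) (fun u p => index p (pages_at eg page u))).
- exact: lin.
- exact: hv.
- move=> u p hp /=; have := Hs u; rewrite -index_mem in hp => h; exact: ltn_trans (leq_trans hp h) qk.
- by move=> u p1 p2 h1 h2 E; rewrite -(nth_index 0 h1) E nth_index.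
- move=> j; apply: (@hex_gen _ (pages_at eg page (xv j))); first by have := Hs (xv j); lia.
  by move=> i; apply: hv; exact: (proj2 (eg_ax i j)).
- move=> i i' j1 j2 j3 p ii' U Hp.
  apply: (nc_gen ii' U lin Hp) => u v w z _ _ _ _ e1 e2 p1 p2.
  by apply: bk => //; rewrite p1 p2.
Qed.

Lemma union_lb q : has_union_embedding eg q -> k <= q.
Proof.
case=> pos [page [[lin un] Hb]]; rewrite leqNgt; apply/negP => qk.
apply: (@core page (fun u p => p < q) (fun u p => p)).
- exact: lin.
- exact: Hb.
- by move=> u p hp; lia.
- by [].
- move=> j; apply: (@hex_gen _ (iota 0 q)); first by rewrite size_iota.
  by move=> i; rewrite mem_iota add0n; apply: Hb; exact: (proj2 (eg_ax i j)).
- move=> i i' j1 j2 j3 p ii' U Hp.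
  have conn : forall x, x \in V5 i i' j1 j2 j3 ->
     connect [rel a b | eg a b && (page a b == p)] (ap i) x /\
     connect [rel a b | eg a b && (page a b == p)] x (ap i).
    have ej : forall (l : 'I_k) j, j \in [:: j1; j2; j3] -> page (ap l) (xv j) = p ->
        [rel a b | eg a b && (page a b == p)] (ap l) (xv j) /\
        [rel a b | eg a b && (page a b == p)] (xv j) (ap l).
      move=> l j hj pl; have [e1 e2] := eg_ax l j.
      by rewrite /= e1 e2 -(lin _ _ e1) pl eqxx.
    have j1in : j1 \in [:: j1; j2; j3] by rewrite !inE eqxx.
    have [a1 a2] := ej i j1 j1in (proj1 (Hp j1 j1in)).
    have [b1 b2] := ej i' j1 j1in (proj2 (Hp j1 j1in)).
    have cx : forall j, j \in [:: j1; j2; j3] ->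
        connect [rel a b | eg a b && (page a b == p)] (ap i) (xv j) /\
        connect [rel a b | eg a b && (page a b == p)] (xv j) (ap i).
      move=> j hj; have [c1 c2] := ej i j hj (proj1 (Hp j hj)); by split; apply: connect1.
    move=> x; rewrite !inE => /or3P [/eqP ->|/eqP ->|/or3P [] /eqP -> ].
    + by rewrite connect0.
    + by split; apply: (connect_trans (y := xv j1)); apply: connect1.
    1-3: by apply: cx; rewrite !inE eqxx ?orbT.
  apply: (nc_gen ii' U lin Hp) => u v w z hu _ hw _ e1 e2 p1 p2.
  apply: un => //; first by rewrite p1 p2.
  rewrite p1; exact: connect_trans (proj2 (conn u hu)) (proj1 (conn w hw)).
Qed.

Definition pg (u v : 'I_n) : nat := minn u v.

Lemma pg_lt u v : eg u v -> pg u v < k.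
Proof. rewrite /eg /pg => /andP [_ h]; lia. Qed.

Lemma book_up : book_embedding eg 1%g pg.
Proof.
split; first by move=> u v _; rewrite /pg minnC.
move=> u v x y e1 e2; rewrite /crossing_pattern !perm1 /pg => E.
apply/negP => /and3P [h1 h2 h3]; lia.
Qed.

Lemma local_up : has_local_book_embedding eg k.
Proof.
exists 1%g, pg; split; first exact: book_up.
move=> v.
have sub : {subset pages_at eg pg v <= iota 0 k}.
  move=> z; rewrite mem_undup => /mapP [u]; rewrite mem_filter => /andP [e _] ->.
  by rewrite mem_iota add0n pg_lt.
by have := uniq_leq_size (undup_uniq _) sub; rewrite size_iota.
Qed.

Lemma union_up : has_union_embedding eg k.
Proof.
exists 1%g, pg; split; last exact: pg_lt.
have [lin bk] := book_up; split => // u v x y e1 e2 E _; exact: bk.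
Qed.


Definition o : 'I_NN := ord0.
Definition str : rel 'I_NN := fun a b => (a != b) && ((a == o) || (b == o)).
Definition bag (t : 'I_NN) : {set 'I_n} := [set v : 'I_n | (v < k) || (v == k + t :> nat)].

Lemma tv_proof (v : 'I_n) : v - k < NN.
Proof. have := ltn_ord v; rewrite /NN; lia. Qed.
Definition tv (v : 'I_n) : 'I_NN := Ordinal (tv_proof v).

Lemma bag_tv v : v \in bag (tv v).
Proof. rewrite inE /=; apply/orP; case: (ltnP v k) => h; [by left | right; apply/eqP; lia]. Qed.

Lemma str_conn_o (R : rel 'I_NN) t : (forall a, str a o -> R a o) -> connect R t o.
Proof.
move=> H; case: (eqVneq t o) => [->|to]; first exact: connect0.
by apply: connect1; apply: H; rewrite /str to eqxx orbT.
Qed.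
Lemma str_conn_o' (R : rel 'I_NN) t : (forall a, str o a -> R o a) -> connect R o t.
Proof.
move=> H; case: (eqVneq t o) => [->|to]; first exact: connect0.
by apply: connect1; apply: H; rewrite /str eq_sym to eqxx.
Qed.

Lemma str_count : #|[set p : 'I_NN * 'I_NN | str p.1 p.2]| = (NN.-1).*2.
Proof.
have -> : [set p : 'I_NN * 'I_NN | str p.1 p.2] =
   [set (o, b) | b in [set~ o]] :|: [set (a, o) | a in [set~ o]].
  apply/setP => [[a b]]; rewrite !inE /str /=; apply/idP/idP.
    case/andP => ab /orP [/eqP ao|/eqP bo]; apply/orP.
      by left; apply/imsetP; exists b; rewrite ?inE -?ao 1?eq_sym // ao.
    by right; apply/imsetP; exists a; rewrite ?inE -?bo // bo.
  case/orP => /imsetP [x]; rewrite !inE => xo [-> ->];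
    [by rewrite eqxx andbT eq_sym | by rewrite eqxx orbT andbT].
rewrite cardsU !card_imset; last by move=> x y [].
  have -> : [set (o, b) | b in [set~ o]] :&: [set (a, o) | a in [set~ o]] = set0.
    apply/setP => [[a b]]; rewrite !inE; apply/negP => /andP [/imsetP [x xo [ea eb]] /imsetP [y yo [ea' eb']]].
    by move: xo; rewrite !inE -eb eb' eqxx.
  by rewrite cards0 subn0 cardsC1 card_ord addnn.
by move=> x y [].
Qed.

Lemma td_up : has_td_of_width eg k.
Proof.
exists NN, str, bag; split; last first.
  move=> t.
  have sub : bag t \subset [set ap i | i in 'I_k] :|: [set xv t].
    apply/subsetP => v; rewrite !inE => /orP [h|/eqP h].
      apply/orP; left; apply/imsetP; exists (Ordinal h) => //; exact: val_inj.
    by apply/orP; right; apply/eqP; apply: val_inj; rewrite /= h.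
  have hA : #|[set ap i | i in 'I_k]| <= k.
    by apply: leq_trans (leq_imset_card _ _) _; rewrite card_ord.
  have := subset_leq_card sub; rewrite cardsU cards1 => h; apply: leq_trans h _; apply: leq_trans (leq_subr _ _) _; by rewrite addn1 ltnS.
split; last split; last split.
- split; first by [].
  split; first by split; [move=> a b; rewrite /str eq_sym orbC | move=> a; rewrite /str eqxx].
  split.
    move=> a b; apply: connect_trans (str_conn_o _ _) (str_conn_o' _ _) => // c.
  exact: str_count.
- by move=> v; exists (tv v); exact: bag_tv.
- move=> u v; rewrite /eg => /andP [uv /orP [hu|hv]].
    case: (ltnP v k) => hv.
      by exists o; rewrite !inE hu hv.
    by exists (tv v); rewrite bag_tv inE hu.
  by exists (tv u); rewrite bag_tv inE hv.
- move=> v t1 t2; case: (ltnP v k) => hv.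
    have H : forall a b, str a b -> [rel a b | [&& str a b, v \in bag a & v \in bag b]] a b.
      by move=> a b h; rewrite /= h !inE hv.
    by move=> _ _; apply: (connect_trans (y := o)); [apply: str_conn_o | apply: str_conn_o'] => c; apply: H.
  have hv' : (v < k) = false by rewrite ltnNge hv.
  rewrite !inE hv' /= => /eqP h1 /eqP h2.
  have -> : t1 = t2 by apply: val_inj => /=; move: h1 h2; lia.
  exact: connect0.
Qed.

Lemma td_lb w : has_td_of_width eg w -> k <= w.
Proof.
case=> m [tr [B [[[m0 [[trC trI] [conn cnt]]] [cov [ecov sub]]] bsz]]].
pose C := [set v : 'I_n | v <= k].
have hkn : k.+1 <= n by rewrite /NN; lia.
have Ccard : k.+1 <= #|C|.
  have s : [set widen_ord hkn i | i in 'I_k.+1] \subset C.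
    by apply/subsetP => v /imsetP [i _ ->]; rewrite inE /= -ltnS.
  have := subset_leq_card s; rewrite card_imset ?card_ord //.
  move=> x y E; apply/val_inj; move/(congr1 val): E; by [].
have [t _ Ct] : exists2 t, t \in [set: 'I_m] & C \subset B t.
  apply: (helly trC trI) => //.
  - by rewrite cardsT card_ord.
  - move=> a b _ _; rewrite (@eq_connect _ _ tr) //.
    by move=> x y; rewrite /RA /= !inE !andbT.
  - rewrite cardsT card_ord -cnt; apply: eq_card => p; rewrite !inE !andbT //.
  - move=> v t1 t2 _ _ h1 h2; have := sub v t1 t2 h1 h2.
    have E : RA tr ([set: 'I_m] :&: [set t | v \in B t]) =2 [rel a b | [&& tr a b, v \in B a & v \in B b]].
      by move=> x y; rewrite /RA /= !inE.
    by rewrite (eq_connect E).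
  - move=> u v; rewrite !inE => hu hv; case: (eqVneq u v) => [<-|uv].
      by have [t ht] := cov u; exists t; rewrite ?inE // ht.
    have e : eg u v by rewrite /eg uv /=; move: uv; rewrite -val_eqE /=; lia.
    by have [t ht] := ecov u v e; exists t; rewrite ?inE.
have := subset_leq_card Ct; have := bsz t => h1 h2; have := leq_trans Ccard (leq_trans h2 h1); by rewrite ltnS.
Qed.

End Main.

Theorem theorem3 (k : nat) (hk : 1 <= k) :
  exists (n : nat) (e : rel 'I_n),
    simple_graph e /\ treewidth_is e k /\
    exists pl pu : nat,
      local_page_number_is e pl /\ union_page_number_is e pu /\
      pl <= pu /\ k <= pl.
Proof.
case: k hk => // k' _.
exists (k'.+1 + NN k'), (eg (k' := k')).
split; first by split; [exact: egC | move=> v; rewrite /eg eqxx].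
split; first by split; [exact: td_up | exact: td_lb].
exists k'.+1, k'.+1; split; first by split; [exact: local_up | exact: local_lb].
by split; first by split; [exact: union_up | exact: union_lb].
Qed.
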